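(* Let $s\in(0,1]$, $p>1$ and $q=\frac{p}{p-1}$. Let $I\subseteq\mathbb{R}$ be an interval, $a,b\in I$ with $a<b$, and let $f:I\to\mathbb{R}$ be differentiable on $I^\circ$ with $f'\in L^1[a,b]$, and suppose $|f'|$ is $s$-convex on $[a,b]$ in the sense that $|f'(tx+(1-t)y)|\le t^{s}|f'(x)|+(1-t^{s})|f'(y)|$ for all $x,y\in[a,b]$, $t\in[0,1]$. Then for every partition $D=\{a=x_0<x_1<\dots<x_n=b\}$ of $[a,b]$, the trapezoidal error $$R(f,D)=\int_a^b f(x)\,dx-\sum_{k=0}^{n-1}\frac{f(x_k)+f(x_{k+1})}{2}(x_{k+1}-x_k)$$ satisfies $$|R(f,D)|\le \frac{1}{2^{1/p}}\left(\frac{s\cdot 2^s+1}{2^s(s+1)(s+2)}\right)^{1/q}\sum_{k=0}^{n-1}\frac{(x_{k+1}-x_k)^2}{2}\bigl[|f'(x_k)|+|f'(x_{k+1})|\bigr].$$ *)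

(* Defs.v *)
From HB Require Import structures.
From mathcomp Require Import all_boot all_order all_algebra.
From mathcomp Require Import all_classical all_reals all_analysis.
Set Implicit Arguments. Unset Strict Implicit. Unset Printing Implicit Defensive.
Import Order.TTheory GRing.Theory Num.Theory.
Local Open Scope classical_set_scope.
Local Open Scope ring_scope.

Definition s_convex_on {R : realType} (s a b : R) (g : R -> R) : Prop :=
  forall x y t, x \in `[a, b] -> y \in `[a, b] -> t \in `[0, 1] ->
    g (t * x + (1 - t) * y) <= t `^ s * g x + (1 - t `^ s) * g y.

Definition is_partition {R : realType} (a b : R) (n : nat) (x : nat -> R) : Prop :=
  x 0%N = a /\ x n = b /\ (forall k, (k < n)%N -> x k < x k.+1).

Definition trap_error {R : realType} (f : R -> R) (a b : R) (n : nat) (x : nat -> R) : R :=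
  (\int[@lebesgue_measure R]_(t in `[a, b]) f t)
  - \sum_(k < n) (f (x k) + f (x k.+1)) / 2 * (x k.+1 - x k).

(* Main.v *)
Require Import Defs.
From HB Require Import structures.
From mathcomp Require Import all_boot all_order all_algebra.
From mathcomp Require Import all_classical all_reals all_analysis.
From mathcomp Require Import ring lra.
Import Order.TTheory GRing.Theory Num.Theory.
Import numFieldNormedType.Exports.
Local Open Scope classical_set_scope.
Local Open Scope ring_scope.
Section S.
Context {R : realType}.
Lemma wd (v h y : R) : is_derive y 1 (fun y => (v - y) / h) (- h^-1).
Proof.
have -> : (fun y => (v - y) / h) = (fun y => h^-1 *: (cst v y - id y)).
  by apply/funext => z /=; rewrite mulrC.
by apply: is_derive_eq; rewrite sub0r scalerN; congr (- _); rewrite /GRing.scale /=; rewrite mulr1.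
Qed.

Lemma Wpow_derive (v h r y : R) : 0 < h -> y < v ->
  is_derive y 1 (fun y => ((v - y) / h) `^ r) (- (r * ((v - y)/h) `^ (r - 1)) / h).
Proof.
move=> h0 yv.
have wp : 0 < (v - y) / h by rewrite divr_gt0 // subr_gt0.
have d1 : derivable (fun y => (v - y) / h) y 1 by case: (wd v h y).
have d2 : derivable (@powR R ^~ r) ((v - y) / h) 1.
  by apply: (@derivable_powR R 1 r); rewrite in_itv /= wp.
have -> : (fun y => ((v - y) / h) `^ r) = (@powR R ^~ r) \o (fun y => (v - y) / h) by [].
split.
  by apply/derivable1_diffP; apply: differentiable_comp; apply/derivable1_diffP.
rewrite -derive1E derive1_comp // powR_derive1 ?in_itv /= ?andbT //.
rewrite derive1E (@derive_val _ _ _ _ _ _ _ (wd v h y)).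
by rewrite mulrN mulNr.
Qed.
Lemma Wpow_cont (v h r c : R) : 0 < h -> 0 < r -> c < v ->
  {within `[c, v], continuous (fun y => ((v - y) / h) `^ r)}.
Proof.
move=> h0 r0 cv.
have cy y : y < v -> {for y, continuous (fun y => ((v - y) / h) `^ r)}.
  move=> yv; have /(_ h0 yv) [dd _] := @Wpow_derive v h r y.
  by apply: differentiable_continuous; apply/derivable1_diffP.
apply/continuous_within_itvP => //; split.
- by move=> y; rewrite in_itv /= => /andP[_ yv]; exact: cy.
- exact/cvg_at_right_filter/cy.
have -> : (fun y => ((v - y) / h) `^ r) = (@powR R ^~ r) \o (fun y => (v - y) / h) by [].
rewrite /= subrr mul0r powR0 ?gt_eqF //.
apply: (@decreasing_cvg_at_left_comp R (fun y => (v - y) / h) (@powR R ^~ r) (BLeft c) v 0).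
- by rewrite bnd_simp.
- move=> x y _ _ xy; rewrite ltr_pM2r ?invr_gt0 //; lra.
- apply: cvg_at_left_filter.
  have : {for v, continuous (fun y => (v - y) / h)}.
    by apply: differentiable_continuous; apply/derivable1_diffP; case: (wd v h v).
  by [].
- rewrite subrr mul0r; exact: powR_cvg0.
Qed.
Lemma pow2_le (s : R) : 0 <= s -> s <= 1 -> 2 `^ s <= 1 + s.
Proof.
move=> s0 s1.
have := @convex_expR R (Itv01 s0 s1) (ln 2) 0.
rewrite !convRE /= expR0 lnK ?posrE // mulr0 addr0.
rewrite /powR ifF ?pnatr_eq0 // mulrC.
move=> h; apply: (le_trans h); rewrite /unstable.onem; lra.
Qed.
Definition Kc (s : R) := (s * 2 `^ s + 1) / (2 `^ s * (s + 1) * (s + 2)).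

Lemma Kc_bounds (s : R) : 0 < s -> s <= 1 -> 4^-1 <= Kc s /\ Kc s <= 2^-1.
Proof.
move=> s0 s1; rewrite /Kc.
have X1 : 1 <= 2 `^ s.
  by rewrite -[X in X <= _](powRr0 2); apply: (@ler_powR R 2); [rewrite ler1n|exact: ltW].
have X2 := @pow2_le s (ltW s0) s1.
have D : 0 < 2 `^ s * (s + 1) * (s + 2) by rewrite !mulr_gt0 //; lra.
split.
- rewrite ler_pdivlMr // mulrC ler_pdivrMr ?ltr0n //.
  have sq : 0 <= s * s * s by rewrite !mulr_ge0 // ltW.
  nra.
  rewrite ler_pdivrMr //; nra.
Qed.

Lemma C_ge (s p q : R) : 0 < s -> s <= 1 -> 1 < p -> q = p / (p - 1) ->
  Kc s <= (2 `^ (p^-1))^-1 * (Kc s) `^ (q^-1).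
Proof.
move=> s0 s1 p1 ->.
have [K1 K2] := @Kc_bounds s s0 s1.
have K0 : 0 < Kc s by apply: lt_le_trans K1; rewrite invr_gt0 ltr0n.
have -> : (p / (p - 1))^-1 = 1 - p^-1.
  by rewrite invf_div; field; apply/eqP; lra.
rewrite powRB ?(gt_eqF K0) ?implybT // powRr1 ?(ltW K0) //.
rewrite mulrC -mulrA -invfM -powRM ?(ltW K0) //.
have y0 : 0 < (Kc s * 2) `^ p^-1 by rewrite powR_gt0 // mulr_gt0.
have y1 : (Kc s * 2) `^ p^-1 <= 1.
  have := @ge0_ler_powR R p^-1 _ (Kc s * 2) 1.
  rewrite powR1; apply => //.
  - by rewrite invr_ge0; lra.
  - by rewrite nnegrE mulr_ge0 // ltW.
  - by rewrite nnegrE.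
  - rewrite -ler_pdivlMr ?ltr0n //; by rewrite div1r.
rewrite ler_pMr // invf_ge1 //.
Qed.

Lemma cmp (F G dF dG : R -> R) (c d : R) : c <= d ->
  (forall y, y \in `]c, d[ -> is_derive y 1 F (dF y)) ->
  (forall y, y \in `]c, d[ -> is_derive y 1 G (dG y)) ->
  (forall y, y \in `]c, d[ -> `|dF y| <= dG y) ->
  {within `[c, d], continuous F} -> {within `[c, d], continuous G} ->
  `|F d - F c| <= G d - G c.
Proof.
move=> cd dF' dG' hd cF cG.
case: (ltgtP c d) cd => // [cd _|<- _]; last by rewrite !subrr normr0.
have [z zcd E1] := @MVT R (G - F) (dG - dF) c d cd
  (fun y hy => is_deriveB (dG' y hy) (dF' y hy))
  (fun x => continuousB (cG x) (cF x)).
have [w wcd E2] := @MVT R (G + F) (dG + dF) c d cd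
  (fun y hy => is_deriveD (dG' y hy) (dF' y hy))
  (fun x => continuousD (cG x) (cF x)).
move: E1 E2 => /= E1 E2.
have := hd _ zcd; have := hd _ wcd.
rewrite !ler_norml => /andP[w1 w2] /andP[z1 z2].
have dc : 0 < d - c by rewrite subr_gt0.
have h2 : 0 <= (dG w + dF w) * (d - c).
  by rewrite mulr_ge0 // ?(ltW dc) //; lra.
have h1 : 0 <= (dG z - dF z) * (d - c) by rewrite mulr_ge0 // ?subr_ge0 // ltW.
have E1' : G d - F d - (G c - F c) = (dG z - dF z) * (d - c) := E1.
have E2' : G d + F d - (G c + F c) = (dG w + dF w) * (d - c) := E2.
apply/andP; split; lra.
Qed.

Lemma wc1 (A : set R) (p g : R -> R) (k : R) : continuous p ->
  {within A, continuous g} -> {within A, continuous (fun y => p y + k * g y)}.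
Proof.
move=> cp cg x.
have h0 : {within A, continuous p} := continuous_subspaceT cp.
have h1 := h0 x.
have h2 := @continuousZl_tmp _ _ _ _ k x (cg x).
have := continuousD h1 h2.
exact.
Qed.

Lemma wc2 (A : set R) (g : R -> R) (k : R) :
  {within A, continuous g} -> {within A, continuous (fun y => g y + k * y)}.
Proof.
move=> cg x.
have cl : continuous (fun y : R => k * y).
  move=> y; apply: differentiable_continuous; apply/derivable1_diffP.
  exact: ex_derive.
have h0 : {within A, continuous (fun y : R => k * y)} := continuous_subspaceT cl.
exact: (continuousD (cg x) (h0 x)).
Qed.

Lemma pcont (p : R -> R) : (forall y, derivable p y 1) -> continuous p.
Proof.
move=> dp y; apply: differentiable_continuous; apply/derivable1_diffP; exact: dp.
Qed.
Lemma piece (s : R) (f df H : R -> R) (u v : R) :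
  0 < s -> s <= 1 -> u < v ->
  (forall y, u <= y -> y <= v -> is_derive y 1 f (df y)) ->
  (forall y, u < y -> y < v -> is_derive y 1 H (f y)) ->
  {within `[u, v], continuous H} ->
  (forall t, 0 <= t -> t <= 1 ->
     `|df (t * u + (1 - t) * v)| <= t `^ s * `|df u| + (1 - t `^ s) * `|df v|) ->
  `|H v - H u - (f u + f v) / 2 * (v - u)| <=
     (v - u) ^+ 2 / 2 * (Kc s * `|df u| + (2^-1 - Kc s) * `|df v|).
Proof.
move=> s0 s1 uv df' dH cH cvx.
have h0 : 0 < v - u by rewrite subr_gt0.
set h := v - u in h0 *.
have hn : h != 0 by rewrite gt_eqF.
have s10 : s + 1 != 0 by rewrite gt_eqF //; lra.
have s20 : s + 2 != 0 by rewrite gt_eqF //; lra.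
set A := `|df u|; set B := `|df v|.
set c := (A - B) * (h / (s + 1)).
pose Psi y := B * y + (- c) * ((v - y) / h) `^ (s + 1).
pose dPsi y := B + (A - B) * ((v - y) / h) `^ s.
have cf : {within `[u, v], continuous f}.
  apply: continuous_in_subspaceT => y; rewrite inE /= in_itv /= => /andP[uy yv].
  apply: differentiable_continuous; apply/derivable1_diffP.
  by case: (df' y uy yv).
have dPsi' y : y < v -> is_derive y 1 Psi (dPsi y).
  move=> yv; have dW := @Wpow_derive v h (s + 1) y h0 yv.
  rewrite /Psi /dPsi; apply: is_derive_eq.
  rewrite /GRing.scale /= addrK /c; field.
  by apply/andP; split.
have bnd z : u < z -> z < v -> `|df z| <= dPsi z.
  move=> uz zv.
  have t0 : 0 <= (v - z) / h by rewrite divr_ge0 // subr_ge0 ltW.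
  have t1 : (v - z) / h <= 1 by rewrite ler_pdivrMr // mul1r /h; lra.
  have := cvx _ t0 t1.
  have -> : (v - z) / h * u + (1 - (v - z) / h) * v = z.
    by rewrite /h; field; rewrite subr_eq0 gt_eqF.
  by move=> /le_trans; apply; rewrite /dPsi /A /B; lra.
have cPsi : {within `[u, v], continuous Psi}.
  apply: (@wc1 _ (fun y => B * y) (fun y => ((v - y) / h) `^ (s + 1))).
    by apply: pcont => y; apply: ex_derive.
  by apply: Wpow_cont => //; lra.
have Fb1 y : u <= y -> y <= v -> `|f y - f u| <= Psi y - Psi u.
  move=> uy yv.
  apply: (@cmp f Psi df dPsi u y uy).
  - move=> z; rewrite in_itv /= => /andP[uz zy]; apply: df'; lra.
  - move=> z; rewrite in_itv /= => /andP[uz zy]; apply: dPsi'; lra.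
  - move=> z; rewrite in_itv /= => /andP[uz zy]; apply: bnd; lra.
  - by apply: continuous_subspaceW cf; apply: subset_itv; rewrite bnd_simp.
  - by apply: continuous_subspaceW cPsi; apply: subset_itv; rewrite bnd_simp.
have Fb2 y : u <= y -> y <= v -> `|f y - f v| <= Psi v - Psi y.
  move=> uy yv; rewrite distrC.
  apply: (@cmp f Psi df dPsi y v yv).
  - move=> z; rewrite in_itv /= => /andP[uz zy]; apply: df'; lra.
  - move=> z; rewrite in_itv /= => /andP[uz zy]; apply: dPsi'; lra.
  - move=> z; rewrite in_itv /= => /andP[uz zy]; apply: bnd; lra.
  - by apply: continuous_subspaceW cf; apply: subset_itv; rewrite bnd_simp.
  - by apply: continuous_subspaceW cPsi; apply: subset_itv; rewrite bnd_simp.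
have Wu : (v - u) / h = 1 by rewrite divff.
have Wv : (v - v) / h = 0 by rewrite subrr mul0r.
have Psiu : Psi u = B * u + (- c) by rewrite /Psi Wu powR1 mulr1.
have Psiv : Psi v = B * v by rewrite /Psi Wv powR0 // mulr0 addr0.
have e21 : s + 2 - 1 = s + 1 by ring.
set m := (u + v) / 2.
have um : u < m by rewrite /m; lra.
have mv : m < v by rewrite /m; lra.
pose G1 y := H y + (- f u) * y.
pose Q1 y := (B * (y - u) ^+ 2 / 2 + c * y) + (c * (h / (s + 2))) * ((v - y) / h) `^ (s + 2).
have C1 : `|G1 m - G1 u| <= Q1 m - Q1 u.
  apply: (@cmp G1 Q1 (fun y => f y - f u) (fun y => Psi y - Psi u) u m (ltW um)).
  - move=> z; rewrite in_itv /= => /andP[uz zm].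
    have dHz := dH z uz (lt_trans zm mv).
    rewrite /G1; apply: is_derive_eq.
    by rewrite /GRing.scale /= mulr1.
  - move=> z; rewrite in_itv /= => /andP[uz zm].
    have dW := @Wpow_derive v h (s + 2) z h0 (lt_trans zm mv).
    rewrite /Q1; apply: is_derive_eq.
    rewrite Psiu /Psi /GRing.scale /= e21; field.
    by apply/andP; split.
  - move=> z; rewrite in_itv /= => /andP[uz zm]; apply: Fb1; lra.
  - apply: (continuous_subspaceW _ (@wc2 _ H (- f u) cH)).
    by apply: subset_itv; rewrite bnd_simp // ltW.
  - have cp1 : continuous (fun y => B * (y - u) ^+ 2 / 2 + c * y).
      by apply: pcont => y; apply: ex_derive.
    have s2 : 0 < s + 2 by lra.
    have W1 := @wc1 `[u, v] (fun y => B * (y - u) ^+ 2 / 2 + c * y)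
       (fun y => ((v - y) / h) `^ (s + 2)) (c * (h / (s + 2)))
       cp1 (@Wpow_cont v h (s + 2) u h0 s2 uv).
    apply: (continuous_subspaceW _ W1).
    by apply: subset_itv; rewrite ?bnd_simp // ltW.
pose G2 y := H y + (- f v) * y.
pose Q2 y := - (B * (v - y) ^+ 2 / 2) + (- (c * (h / (s + 2)))) * ((v - y) / h) `^ (s + 2).
have C2 : `|G2 v - G2 m| <= Q2 v - Q2 m.
  apply: (@cmp G2 Q2 (fun y => f y - f v) (fun y => Psi v - Psi y) m v (ltW mv)).
  - move=> z; rewrite in_itv /= => /andP[mz zv].
    have dHz := dH z (lt_trans um mz) zv.
    rewrite /G2; apply: is_derive_eq.
    by rewrite /GRing.scale /= mulr1.
  - move=> z; rewrite in_itv /= => /andP[mz zv].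
    have dW := @Wpow_derive v h (s + 2) z h0 zv.
    rewrite /Q2; apply: is_derive_eq.
    rewrite Psiv /Psi /GRing.scale /= e21; field.
    by apply/andP; split.
  - move=> z; rewrite in_itv /= => /andP[mz zv]; apply: Fb2; lra.
  - apply: (continuous_subspaceW _ (@wc2 _ H (- f v) cH)).
    by apply: subset_itv; rewrite ?bnd_simp // ltW.
  - have cp1 : continuous (fun y => - (B * (v - y) ^+ 2 / 2)).
      by apply: pcont => y; apply: ex_derive.
    have s2 : 0 < s + 2 by lra.
    have W1 := @wc1 `[u, v] (fun y => - (B * (v - y) ^+ 2 / 2))
       (fun y => ((v - y) / h) `^ (s + 2)) (- (c * (h / (s + 2))))
       cp1 (@Wpow_cont v h (s + 2) u h0 s2 uv).
    apply: (continuous_subspaceW _ W1).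
    by apply: subset_itv; rewrite ?bnd_simp // ltW.
have E : H v - H u - (f u + f v) / 2 * h = (G1 m - G1 u) + (G2 v - G2 m).
  by rewrite /G1 /G2 /m /h; field.
rewrite E; apply: le_trans (ler_normD _ _) _; apply: le_trans (lerD C1 C2) _.
have Wm : (v - m) / h = 2^-1 by rewrite /m /h; field; rewrite subr_eq0 gt_eqF.
have X0 : 0 < 2 `^ s by rewrite powR_gt0.
have P : (2^-1) `^ (s + 2) = (2 `^ s * 4)^-1.
  apply: (@mulIf _ (2 `^ (s + 2))); first by rewrite gt_eqF // powR_gt0.
  rewrite -powRM ?invr_ge0 // mulVf ?pnatr_eq0 // powR1.
  rewrite powRD ?pnatr_eq0 ?implybT // (@powR_mulrn _ 2 2) // -natrX mulVf //.
rewrite /Q1 /Q2 Wm Wu Wv powR1 powR0 // P.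
rewrite le_eqVlt; apply/orP; left; apply/eqP.
rewrite /Kc /c /m /h; field.
by rewrite s20 s10 gt_eqF.
Qed.
Lemma itv_interior (I : set R) (a b : R) : is_interval I ->
  interior I a -> interior I b -> forall y, a <= y -> y <= b -> interior I y.
Proof.
move=> Ii /nbhs_ballP[ea ea0 Ba] /nbhs_ballP[eb eb0 Bb] y ay yb.
have {}ea0 : (0 : R) < ea := ea0.
have {}eb0 : (0 : R) < eb := eb0.
have Ia : I (a - ea / 2).
  apply: Ba; rewrite /ball /= (_ : a - (a - ea / 2) = ea / 2); last by ring.
  rewrite ger0_norm; lra.
have Ib : I (b + eb / 2).
  apply: Bb; rewrite /ball /= (_ : b - (b + eb / 2) = - (eb / 2)); last by ring.
  rewrite normrN ger0_norm; lra.
have m1 : Num.min ea eb <= ea by rewrite ge_min lexx.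
have m2 : Num.min ea eb <= eb by rewrite ge_min lexx orbT.
have m0 : 0 < Num.min ea eb by rewrite lt_min ea0 eb0.
apply/nbhs_ballP; exists (Num.min ea eb / 2); first by rewrite /= divr_gt0.
move=> z; rewrite /ball /= ltr_norml => /andP[z1 z2].
apply: (Ii _ _ Ia Ib); apply/andP; split; lra.
Qed.
End S.

Theorem proposition4 (R : realType) (s p q : R) (I : set R) (a b : R) (f : R -> R) :
  0 < s -> s <= 1 -> 1 < p -> q = p / (p - 1) ->
  is_interval I -> (interior I) a -> (interior I) b -> a < b ->
  (forall x, (interior I) x -> derivable f x 1) ->
  (@lebesgue_measure R).-integrable `[a, b] (EFin \o derive1 f) ->
  s_convex_on s a b (fun x => `|derive1 f x|) ->
  forall (n : nat) (x : nat -> R), is_partition a b n x ->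
  `|trap_error f a b n x| <=
    (2 `^ (p^-1))^-1
    * ((s * 2 `^ s + 1) / (2 `^ s * (s + 1) * (s + 2))) `^ (q^-1)
    * \sum_(k < n) (x k.+1 - x k) ^+ 2 / 2 * (`|derive1 f (x k)| + `|derive1 f (x k.+1)|).
Proof.
move=> s0 s1 p1 hq Ii Ia Ib ab fder _ cvx n x [x0 [xn xinc]].
have fd y : a <= y -> y <= b -> is_derive y 1 f (derive1 f y).
  move=> ay yb; rewrite derive1E; apply: derivableP.
  exact: (fder y (@itv_interior _ I a b Ii Ia Ib y ay yb)).
have cf : {within `[a, b], continuous f}.
  apply: continuous_in_subspaceT => y; rewrite inE /= in_itv /= => /andP[ay yb].
  apply: differentiable_continuous; apply/derivable1_diffP.
  by case: (fd y ay yb).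
have fint : (@lebesgue_measure R).-integrable `[a, b] (EFin \o f).
  by apply: continuous_compact_integrable => //; exact: segment_compact.
pose H y := \int[@lebesgue_measure R]_(t in `[a, y]) f t.
have dH y : a < y -> y < b -> is_derive y 1 H (f y).
  move=> ay yb.
  have cfy : {for y, continuous f}.
    apply: differentiable_continuous; apply/derivable1_diffP.
    by case: (fd y (ltW ay) (ltW yb)).
  have [d1 d2] := @continuous_FTC1_closed R f a y b yb fint ay cfy.
  by split => //; rewrite -derive1E.
have cH : {within `[a, b], continuous H}.
  exact: (@parameterized_integral_continuous R a b f (ltW ab) fint).
have Ha : H a = 0 by rewrite /H set_itv1 Rintegral_set1.
have mono j : (j <= n)%N -> forall i, (i <= j)%N -> x i <= x j.
  elim: j => [_ i|j IH jn i]; first by rewrite leqn0 => /eqP ->.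
  rewrite leq_eqVlt => /orP[/eqP -> //|ij].
  apply: (le_trans (IH (ltnW jn) i ij)); exact/ltW/xinc.
have xa k : (k <= n)%N -> a <= x k by move=> kn; rewrite -x0; apply: mono.
have xb k : (k <= n)%N -> x k <= b by move=> kn; rewrite -xn; apply: mono.
have TE : trap_error f a b n x = \sum_(k < n) (H (x k.+1) - H (x k)
    - (f (x k) + f (x k.+1)) / 2 * (x k.+1 - x k)).
  rewrite /trap_error sumrB; congr (_ - _).
  rewrite -/(H b) -xn -(big_mkord xpredT (fun k => H (x k.+1) - H (x k))).
  by rewrite telescope_sumr // x0 Ha subr0.
rewrite TE; apply: le_trans (ler_norm_sum _ _ _) _.
rewrite mulr_sumr; apply: ler_sum => k _.
have hk : (k < n)%N := ltn_ord k.
have uv := xinc k hk.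
have au := xa k (ltnW hk).
have vb := xb k.+1 hk.
have := @piece R s f (derive1 f) H (x k) (x k.+1) s0 s1 uv.
have CK := @C_ge R s p q s0 s1 p1 hq.
have [K1 K2] := @Kc_bounds R s s0 s1.
move: CK K1 K2; rewrite /Kc => CK K1 K2.
set K := (s * 2 `^ s + 1) / (2 `^ s * (s + 1) * (s + 2)) in K1 K2 CK *.
set C := (2 `^ p^-1)^-1 * K `^ q^-1 in CK *.
move=> /(_ _ _ _ _) hb; apply: le_trans (hb _ _ _ _) _.
- move=> y uy yv; apply: fd; lra.
- move=> y uy yv; apply: dH; lra.
- apply: (continuous_subspaceW _ cH); apply: subset_itv; rewrite ?bnd_simp //.
- move=> t t0 t1; apply: cvx; rewrite ?in_itv /= ?t0 ?t1 //; apply/andP; split => //; lra.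
set A := `|derive1 f (x k)|; set B := `|derive1 f (x k.+1)|.
set T := (x k.+1 - x k) ^+ 2 / 2.
have T0 : 0 <= T by rewrite divr_ge0 // sqr_ge0.
have A0 : 0 <= A by rewrite /A normr_ge0.
have B0 : 0 <= B by rewrite /B normr_ge0.
rewrite mulrCA; apply: ler_wpM2l => //.
rewrite mulrDr; apply: lerD; apply: ler_wpM2r => //; lra.
Qed.
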